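(* Let $\delta=(\mathbf a_1,\mathbf a_2,\mathbf a_3)$ be a nondegenerate, positively oriented m-triangle in the $xy$-plane with normal $\mathbf a_1\times\mathbf a_2/|\mathbf a_1\times\mathbf a_2|=\mathbf k$, whose shape $\delta^\ast$ is not the north pole. Let $\{\mathbf u_1,\mathbf u_2\}$ be an eigenframe of the inertia tensor $B_\delta$ in the plane, with $\mathbf u_1$ the eigenvector for the smallest eigenvalue $\lambda_1$, and let $\psi_i$ be the oriented angle from $\mathbf a_1$ to $\mathbf u_i$. Then $$\tan\frac\theta2=-\frac{1+\sin\varphi}{\cos\varphi}\tan\psi_1=\frac{1+\sin\varphi}{\cos\varphi}\cot\psi_2,$$ where $(\varphi,\theta)$ are the spherical coordinates of $\delta^\ast$ on the shape sphere: $\varphi$ the colatitude and $\theta$ the longitude (eastward, with $\theta=0$ at the binary collision shape $\mathfrak b_{23}$).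
   Context: Masses $m_1,m_2,m_3>0$, $m_1+m_2+m_3=1$; m-triangle $(\mathbf a_1,\mathbf a_2,\mathbf a_3)$ with $\sum m_i\mathbf a_i=0$. Inertia tensor $B_\delta(\mathbf u,\mathbf v)=\sum m_j(\mathbf u\times\mathbf a_j)\cdot(\mathbf v\times\mathbf a_j)$. The shape sphere $M^\ast$ (oriented m-triangles with $\sum m_i|\mathbf a_i|^2=1$ modulo rotation, with the kinematic metric $\frac14(d\varphi^2+\sin^2\varphi\,d\theta^2)$) has its equator consisting of collinear shapes and its north pole equal to the shape of the positively oriented m-triangle with $m_j|\mathbf a_j|^2=(1-m_j)/2$; the northern hemisphere consists of positively oriented shapes. $\mathfrak b_{ij}$ is the binary collision shape $\mathbf a_i=\mathbf a_j$ on the equator. The eastward direction of increasing longitude is the positive direction of the equator induced by the orientation of the northern hemisphere, in which $\mathfrak b_{23},\mathfrak b_{31},\mathfrak b_{12}$ appear in positive cyclic order. *)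

(* Defs.v *)
From mathcomp Require Import all_boot all_order all_algebra.
From mathcomp Require Import reals trigo.
Set Implicit Arguments. Unset Strict Implicit. Unset Printing Implicit Defensive.
Import Order.TTheory GRing.Theory Num.Theory.
Local Open Scope ring_scope.

Section ShapeSphere.
Variable R : realType.

Record vec3 := V3 { vx : R; vy : R; vz : R }.

Definition vzero : vec3 := V3 0 0 0.
Definition kvec : vec3 := V3 0 0 1.
Definition dot (u v : vec3) : R := vx u * vx v + vy u * vy v + vz u * vz v.
Definition cross (u v : vec3) : vec3 :=
  V3 (vy u * vz v - vz u * vy v) (vz u * vx v - vx u * vz v)
     (vx u * vy v - vy u * vx v).
Definition norm3 (u : vec3) : R := Num.sqrt (dot u u).
Definition scale3 (c : R) (u : vec3) : vec3 := V3 (c * vx u) (c * vy u) (c * vz u).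
Definition in_xy (u : vec3) : Prop := vz u = 0.

Definition m_triangle (m1 m2 m3 : R) (a1 a2 a3 : vec3) : Prop :=
  m1 * vx a1 + m2 * vx a2 + m3 * vx a3 = 0 /\
  m1 * vy a1 + m2 * vy a2 + m3 * vy a3 = 0 /\
  m1 * vz a1 + m2 * vz a2 + m3 * vz a3 = 0.

Definition inertia (m1 m2 m3 : R) (a1 a2 a3 : vec3) (u v : vec3) : R :=
  m1 * dot (cross u a1) (cross v a1) + m2 * dot (cross u a2) (cross v a2)
  + m3 * dot (cross u a3) (cross v a3).

Definition is_eigenvalue (B : vec3 -> vec3 -> R) (mu : R) : Prop :=
  exists v, v <> vzero /\ forall w, B v w = mu * dot v w.

Definition rot_k (psi : R) (u : vec3) : vec3 :=
  V3 (cos psi * vx u - sin psi * vy u) (sin psi * vx u + cos psi * vy u) (vz u).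

(* psi is the oriented angle (about k) from a to u (both nonzero, in the xy-plane):
   u/|u| = rot_k psi (a/|a|) *)
Definition oriented_angle (a u : vec3) (psi : R) : Prop :=
  scale3 (norm3 a) u = scale3 (norm3 u) (rot_k psi a).

(* The north pole of the shape sphere: the shape of the positively oriented
   m-triangle with m_j |b_j|^2 = (1 - m_j)/2; delta has this shape iff it is
   obtained from such a triangle by a rotation about k and a positive scaling. *)
Definition is_north_pole_shape (m1 m2 m3 : R) (a1 a2 a3 : vec3) : Prop :=
  exists (b1 b2 b3 : vec3) (c alpha : R),
    [/\ in_xy b1, in_xy b2, in_xy b3, m_triangle m1 m2 m3 b1 b2 b3 &
     0 < vz (cross b1 b2)] /\
    [/\ m1 * dot b1 b1 = (1 - m1) / 2, m2 * dot b2 b2 = (1 - m2) / 2 &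
        m3 * dot b3 b3 = (1 - m3) / 2] /\
    0 < c /\
    [/\ a1 = scale3 c (rot_k alpha b1), a2 = scale3 c (rot_k alpha b2) &
        a3 = scale3 c (rot_k alpha b3)].

(* Model of the shape sphere (for planar m-triangles in the xy-plane) via
   mass-weighted Jacobi vectors z1 = c1 (a3 - a2), z2 = c2 a1 and the Hopf map;
   the unit-sphere point (X,Y,Z) of the shape of delta: Z-axis through the north
   pole, X-axis through b_23, eastward = from X towards Y. *)
Definition moment (m1 m2 m3 : R) (a1 a2 a3 : vec3) : R :=
  m1 * dot a1 a1 + m2 * dot a2 a2 + m3 * dot a3 a3.
Definition jac1x (m1 m2 m3 : R) (a1 a2 a3 : vec3) : R :=
  Num.sqrt (m2 * m3 / (m2 + m3)) * (vx a3 - vx a2).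
Definition jac1y (m1 m2 m3 : R) (a1 a2 a3 : vec3) : R :=
  Num.sqrt (m2 * m3 / (m2 + m3)) * (vy a3 - vy a2).
Definition jac2x (m1 m2 m3 : R) (a1 a2 a3 : vec3) : R :=
  Num.sqrt (m1 / (m2 + m3)) * vx a1.
Definition jac2y (m1 m2 m3 : R) (a1 a2 a3 : vec3) : R :=
  Num.sqrt (m1 / (m2 + m3)) * vy a1.

Definition shapeX (m1 m2 m3 : R) (a1 a2 a3 : vec3) : R :=
  let x1 := jac1x m1 m2 m3 a1 a2 a3 in let y1 := jac1y m1 m2 m3 a1 a2 a3 in
  let x2 := jac2x m1 m2 m3 a1 a2 a3 in let y2 := jac2y m1 m2 m3 a1 a2 a3 in
  ((x2 ^+ 2 + y2 ^+ 2) - (x1 ^+ 2 + y1 ^+ 2)) / moment m1 m2 m3 a1 a2 a3.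
Definition shapeY (m1 m2 m3 : R) (a1 a2 a3 : vec3) : R :=
  let x1 := jac1x m1 m2 m3 a1 a2 a3 in let y1 := jac1y m1 m2 m3 a1 a2 a3 in
  let x2 := jac2x m1 m2 m3 a1 a2 a3 in let y2 := jac2y m1 m2 m3 a1 a2 a3 in
  2 * (x1 * x2 + y1 * y2) / moment m1 m2 m3 a1 a2 a3.
Definition shapeZ (m1 m2 m3 : R) (a1 a2 a3 : vec3) : R :=
  let x1 := jac1x m1 m2 m3 a1 a2 a3 in let y1 := jac1y m1 m2 m3 a1 a2 a3 in
  let x2 := jac2x m1 m2 m3 a1 a2 a3 in let y2 := jac2y m1 m2 m3 a1 a2 a3 in
  2 * (x1 * y2 - y1 * x2) / moment m1 m2 m3 a1 a2 a3.

Definition shape_coords (m1 m2 m3 : R) (a1 a2 a3 : vec3) (phi theta : R) : Prop :=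
  [/\ 0 <= phi <= pi,
      shapeX m1 m2 m3 a1 a2 a3 = sin phi * cos theta,
      shapeY m1 m2 m3 a1 a2 a3 = sin phi * sin theta &
      shapeZ m1 m2 m3 a1 a2 a3 = cos phi].

Definition cot (x : R) : R := cos x / sin x.

End ShapeSphere.

(* Main.v *)
Require Import Defs.
From mathcomp Require Import all_boot all_order all_algebra.
From mathcomp Require Import reals trigo.
From mathcomp Require Import ring lra.
Import Order.TTheory GRing.Theory Num.Theory.
Local Open Scope ring_scope.
Lemma tan_dbl (R : realType) (y : R) : tan y = sin (y + y) / (1 + cos (y + y)).
Proof.
rewrite sinD cosD /tan; have [c0|c0] := eqVneq (cos y) 0.
  rewrite c0 !mulr0 mul0r !add0r. 
  have : sin y ^+ 2 = 1 by rewrite sin2cos2 c0 expr0n subr0.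
  by rewrite expr2 => ->; rewrite subrr invr0 !mulr0.
have -> : 1 + (cos y * cos y - sin y * sin y) = 2 * cos y ^+ 2.
  by move: (cos2Dsin2 y); rewrite !expr2; lra.
by field; rewrite c0.
Qed.
Lemma tan_half (R : realType) (x : R) : tan (x/2) = sin x / (1 + cos x).
Proof. by rewrite tan_dbl -splitr. Qed.
Lemma com_bil {R : realFieldType} {m1 m2 m3 p q r p' q' r' : R} :
 m1+m2+m3 = 1 -> m2+m3 != 0 -> m1 * p+m2 * q+m3 * r = 0 -> m1 * p'+m2 * q'+m3 * r' = 0 ->
 m1 * p * p' + m2 * q * q' + m3 * r * r' = m2 * m3/(m2+m3)  *  ((r-q) * (r'-q')) + m1/(m2+m3)  *  (p * p').
Proof.
move=> s M0 c c'.
have m1E : m1 = 1 - m2 - m3 by lra.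
have E: m1 * p * p' + m2 * q * q' + m3 * r * r' - (m2 * m3/(m2+m3)  *  ((r-q) * (r'-q')) + m1/(m2+m3)  *  (p * p')) = ((m1 * p+m2 * q+m3 * r) * (m1 * p'+m2 * q'+m3 * r') - (m1 * p+m2 * q+m3 * r) * m1 * p' - m1 * p * (m1 * p'+m2 * q'+m3 * r'))/(m2+m3).
  by rewrite m1E; field.
by apply/eqP; rewrite -subr_eq0 E c c' !(mulr0, mul0r, subr0).
Qed.
Lemma eig_alg {R : realFieldType} {A Bw I T l ux uy : R} :
  ux * ((I - A) / 2) - uy * (Bw / 2) = l * ux ->
  uy * ((I + A) / 2) - ux * (Bw / 2) = l * uy ->
  ux ^+ 2 + uy ^+ 2 = 1 -> T ^+ 2 = A ^+ 2 + Bw ^+ 2 -> 0 < T -> l <= (I - T) / 2 ->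
  T * (ux ^+ 2 - uy ^+ 2) = A /\ 2 * T * ux * uy = Bw.
Proof.
move=> e1 e2 u1 TA Tp lle.
set c := I - 2 * l.
have cT : T <= c by rewrite /c; lra.
have e1' : (c - A) * ux = Bw * uy by rewrite /c; lra.
have e2' : Bw * ux = (c + A) * uy by rewrite /c; lra.
have f1 : (c ^+ 2 - T ^+ 2) * ux = 0.
  have -> : (c ^+ 2 - T ^+ 2) * ux = (c + A) * ((c - A) * ux) - Bw * (Bw * ux) by rewrite TA; ring.
  by rewrite e1' e2'; ring.
have f2 : (c ^+ 2 - T ^+ 2) * uy = 0.
  have -> : (c ^+ 2 - T ^+ 2) * uy = (c - A) * ((c + A) * uy) - Bw * (Bw * uy) by rewrite TA; ring.
  by rewrite -e1' -e2'; ring.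
have f3 : c ^+ 2 - T ^+ 2 = 0.
  have -> : c ^+ 2 - T ^+ 2 = ((c ^+ 2 - T ^+ 2) * ux) * ux + ((c ^+ 2 - T ^+ 2) * uy) * uy.
    by rewrite -[LHS]mulr1 -u1; ring.
  by rewrite f1 f2; ring.
have cE : c = T.
  have : (c - T) * (c + T) = 0 by rewrite -f3; ring.
  move/eqP; rewrite mulf_eq0 => /orP[/eqP h|/eqP h]; lra.
rewrite cE in e1' e2'.
split.
  have -> : A = A * (ux ^+ 2 + uy ^+ 2) by rewrite u1 mulr1.
  have h1 : ((T - A) * ux) * ux = (Bw * uy) * ux by rewrite e1'.
  have h2 : (Bw * ux) * uy = ((T + A) * uy) * uy by rewrite e2'.
  lra.
have -> : Bw = Bw * (ux ^+ 2 + uy ^+ 2) by rewrite u1 mulr1.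
have h1 : ((T - A) * ux) * uy = (Bw * uy) * uy by rewrite e1'.
have h2 : (Bw * ux) * ux = ((T + A) * uy) * ux by rewrite e2'.
lra.
Qed.
Lemma divKK {R : fieldType} (k n d : R) : k != 0 -> (k * n) / (k * d) = n / d.
Proof. by move=> k0; rewrite invfM mulrACA mulfV // mul1r. Qed.

Lemma half_ratio {R : fieldType} (n d : R) : (2:R) != 0 -> n / d = (2 * n * d) / (2 * d ^+ 2).
Proof.
move=> h2; have [->|d0] := eqVneq d 0; first by rewrite expr0n /= !mulr0 invr0 !mulr0.
by field; rewrite d0 h2.
Qed.

Lemma core {R : realFieldType} (x1 y1 x2 y2 ux uy T : R) :
  let I := x1 ^+ 2 + y1 ^+ 2 + x2 ^+ 2 + y2 ^+ 2 in
  let Q := x1 * y2 - y1 * x2 in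
  let A := x1 ^+ 2 - y1 ^+ 2 + x2 ^+ 2 - y2 ^+ 2 in
  let Bw := 2 * (x1 * y1 + x2 * y2) in
  0 < Q -> 0 < T -> 0 < I -> T ^+ 2 = I ^+ 2 - 4 * Q ^+ 2 -> ux ^+ 2 + uy ^+ 2 = 1 ->
  T * (ux ^+ 2 - uy ^+ 2) = A -> 2 * T * ux * uy = Bw ->
  2 * (x1 * x2 + y1 * y2) / (T + (x2 ^+ 2 + y2 ^+ 2) - (x1 ^+ 2 + y1 ^+ 2)) =
  - ((1 + T / I) / (2 * Q / I)) * ((x2 * uy - y2 * ux) / (x2 * ux + y2 * uy)).
Proof.
move=> I Q A Bw Qp Tp Ip TQ u1 eA eB.
have h2 : (2:R) != 0 by rewrite pnatr_eq0.
set n := x2 * uy - y2 * ux; set d := x2 * ux + y2 * uy.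
have T0 : T != 0 by rewrite gt_eqF.
rewrite (half_ratio n d h2).
rewrite -(divKK T (2 * n * d) (2 * d ^+ 2) T0).
have eN : T * (2 * n * d) = - 2 * (x1 * x2 + y1 * y2) * Q.
  have -> : T * (2 * n * d) = (x2 ^+ 2 - y2 ^+ 2) * (2 * T * ux * uy) - 2 * x2 * y2 * (T * (ux ^+ 2 - uy ^+ 2)) by rewrite /n /d; ring.
  by rewrite eA eB /A /Bw /Q; ring.
set E := T + (x2 ^+ 2 + y2 ^+ 2) - (x1 ^+ 2 + y1 ^+ 2).
have eD : T * (2 * d ^+ 2) = (I + T) * E / 2.
  have -> : T * (2 * d ^+ 2) = T * (x2 ^+ 2 + y2 ^+ 2) * (ux ^+ 2 + uy ^+ 2) + (x2 ^+ 2 - y2 ^+ 2) * (T * (ux ^+ 2 - uy ^+ 2)) + x2 * y2 * (2 * T * ux * uy) * 2 by rewrite /d; ring.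
  rewrite u1 eA eB /A /Bw /E /I; move: TQ; rewrite /I /Q => TQ; lra.
rewrite eN eD.
have [E0|E0] := eqVneq E 0.
  by rewrite E0 !(mulr0, mul0r, invr0).
have I0 : I != 0 by rewrite gt_eqF.
have Q0 : Q != 0 by rewrite gt_eqF.
have IT0 : I + T != 0 by rewrite gt_eqF // addr_gt0.
by field; rewrite E0 I0 Q0 IT0.
Qed.
Lemma angle_tan {R : realType} (p q ux uy psi na : R) : 0 < na -> 0 < p ^+ 2 + q ^+ 2 ->
  na * ux = cos psi * p - sin psi * q -> na * uy = sin psi * p + cos psi * q ->
  tan psi = (p * uy - q * ux) / (p * ux + q * uy) /\
  cot psi = (p * ux + q * uy) / (p * uy - q * ux).
Proof.
move=> nap Gp e1 e2.
set k := na / (p ^+ 2 + q ^+ 2).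
have k0 : k != 0 by rewrite gt_eqF // divr_gt0.
have G0 : p ^+ 2 + q ^+ 2 != 0 by rewrite gt_eqF.
have es : sin psi = k * (p * uy - q * ux).
  have -> : k * (p * uy - q * ux) = (p * (na * uy) - q * (na * ux)) / (p ^+ 2 + q ^+ 2) by rewrite /k; field.
  by rewrite e1 e2; field.
have ec : cos psi = k * (p * ux + q * uy).
  have -> : k * (p * ux + q * uy) = (p * (na * ux) + q * (na * uy)) / (p ^+ 2 + q ^+ 2) by rewrite /k; field.
  by rewrite e1 e2; field.
by rewrite /tan /cot es ec !divKK.
Qed.

Lemma np_mass {R : realFieldType} (m1 m2 m3 p1 q1 p2 q2 p3 q3 : R) :
  m1 + m2 + m3 = 1 -> m1 * p1 + m2 * p2 + m3 * p3 = 0 -> m1 * q1 + m2 * q2 + m3 * q3 = 0 ->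
  m2 * m3 * ((p3 - p2) ^+ 2 + (q3 - q2) ^+ 2) = m1 * (p1 ^+ 2 + q1 ^+ 2) ->
  (p3 - p2) * p1 + (q3 - q2) * q1 = 0 ->
  (m2 + m3) ^+ 2 * (m2 * (p2 ^+ 2 + q2 ^+ 2)) = (m2 + m3) * ((1 - m2) * (m1 * (p1 ^+ 2 + q1 ^+ 2))) /\
  (m2 + m3) ^+ 2 * (m3 * (p3 ^+ 2 + q3 ^+ 2)) = (m2 + m3) * ((1 - m3) * (m1 * (p1 ^+ 2 + q1 ^+ 2))).
Proof.
move=> s cx cy hd hp.
have eP2 : (m2 + m3) * p2 = - (m1 * p1) - m3 * (p3 - p2) by lra.
have eQ2 : (m2 + m3) * q2 = - (m1 * q1) - m3 * (q3 - q2) by lra.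
have eP3 : (m2 + m3) * p3 = - (m1 * p1) + m2 * (p3 - p2) by lra.
have eQ3 : (m2 + m3) * q3 = - (m1 * q1) + m2 * (q3 - q2) by lra.
have m1E : m1 = 1 - m2 - m3 by lra.
split.
  have -> : (m2 + m3) ^+ 2 * (m2 * (p2 ^+ 2 + q2 ^+ 2)) = m2 * (((m2 + m3) * p2) ^+ 2 + ((m2 + m3) * q2) ^+ 2) by ring.
  rewrite eP2 eQ2.
  have -> : m2 * ((- (m1 * p1) - m3 * (p3 - p2)) ^+ 2 + (- (m1 * q1) - m3 * (q3 - q2)) ^+ 2) =
     m2 * m1 ^+ 2 * (p1 ^+ 2 + q1 ^+ 2) + m3 * (m2 * m3 * ((p3 - p2) ^+ 2 + (q3 - q2) ^+ 2)) + 2 * m1 * m2 * m3 * ((p3 - p2) * p1 + (q3 - q2) * q1) by ring.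
  rewrite hd hp m1E; ring.
have -> : (m2 + m3) ^+ 2 * (m3 * (p3 ^+ 2 + q3 ^+ 2)) = m3 * (((m2 + m3) * p3) ^+ 2 + ((m2 + m3) * q3) ^+ 2) by ring.
rewrite eP3 eQ3.
have -> : m3 * ((- (m1 * p1) + m2 * (p3 - p2)) ^+ 2 + (- (m1 * q1) + m2 * (q3 - q2)) ^+ 2) =
   m3 * m1 ^+ 2 * (p1 ^+ 2 + q1 ^+ 2) + m2 * (m2 * m3 * ((p3 - p2) ^+ 2 + (q3 - q2) ^+ 2)) - 2 * m1 * m2 * m3 * ((p3 - p2) * p1 + (q3 - q2) * q1) by ring.
rewrite hd hp m1E; ring.
Qed.

Lemma TA_id {R : comRingType} (x1 y1 x2 y2 : R) :
  (x1 ^+ 2 + y1 ^+ 2 + x2 ^+ 2 + y2 ^+ 2) ^+ 2 - 4 * (x1 * y2 - y1 * x2) ^+ 2 =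
  (x1 ^+ 2 - y1 ^+ 2 + x2 ^+ 2 - y2 ^+ 2) ^+ 2 + (2 * (x1 * y1 + x2 * y2)) ^+ 2.
Proof. ring. Qed.

Lemma np_case {R : realType} (m1 m2 m3 p1 q1 p2 q2 p3 q3 k1 k2 : R) :
  0 < m1 -> 0 < m2 -> 0 < m3 -> m1 + m2 + m3 = 1 ->
  m1 * p1 + m2 * p2 + m3 * p3 = 0 -> m1 * q1 + m2 * q2 + m3 * q3 = 0 ->
  0 < p1 * q2 - q1 * p2 -> 0 < k1 ->
  k1 ^+ 2 = m2 * m3 / (m2 + m3) -> k2 ^+ 2 = m1 / (m2 + m3) ->
  k1 * (p3 - p2) = k2 * q1 -> k1 * (q3 - q2) = - (k2 * p1) ->
  is_north_pole_shape m1 m2 m3 (V3 p1 q1 0) (V3 p2 q2 0) (V3 p3 q3 0).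
Proof.
move=> m1p m2p m3p msum cx cy Cp k1p k1s k2s d1 d2.
have Mp : 0 < m2 + m3 by lra.
have M0 : m2 + m3 != 0 by rewrite gt_eqF.
have k10 : k1 != 0 by rewrite gt_eqF.
have hp : (p3 - p2) * p1 + (q3 - q2) * q1 = 0.
  apply: (mulfI k10); rewrite mulr0 mulrDr !mulrA d1 d2; lra.
have Gp : 0 < p1 ^+ 2 + q1 ^+ 2.
  rewrite lt_neqAle addr_ge0 ?sqr_ge0 // andbT eq_sym; apply/negP.
  rewrite paddr_eq0 ?sqr_ge0 // !sqrf_eq0 => /andP[/eqP h /eqP h'].
  by move: Cp; rewrite h h' !mul0r subrr ltxx.
have G0 : p1 ^+ 2 + q1 ^+ 2 != 0 by rewrite gt_eqF.
have m10 : m1 != 0 by rewrite gt_eqF.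
have hd : m2 * m3 * ((p3 - p2) ^+ 2 + (q3 - q2) ^+ 2) = m1 * (p1 ^+ 2 + q1 ^+ 2).
  have : k1 ^+ 2 * ((p3 - p2) ^+ 2 + (q3 - q2) ^+ 2) = k2 ^+ 2 * (p1 ^+ 2 + q1 ^+ 2).
    by rewrite mulrDr -!exprMn d1 d2; lra.
  rewrite k1s k2s => h.
  have -> : m2 * m3 * ((p3 - p2) ^+ 2 + (q3 - q2) ^+ 2) = (m2 * m3 / (m2 + m3) * ((p3 - p2) ^+ 2 + (q3 - q2) ^+ 2)) * (m2 + m3) by field.
  by rewrite h; field.
have [e2 e3] := np_mass _ _ _ _ _ _ _ _ _ msum cx cy hd hp.
set G := p1 ^+ 2 + q1 ^+ 2 in G0 Gp hd e2 e3.
set I := 2 * (m1 * G) / (m2 + m3).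
have Ip : 0 < I by rewrite /I divr_gt0 // mulr_gt0 // mulr_gt0.
set c := Num.sqrt I.
have cp : 0 < c by rewrite sqrtr_gt0.
have c0 : c != 0 by rewrite gt_eqF.
have ci : c^-1 ^+ 2 = I^-1 by rewrite exprVn sqr_sqrtr // ltW.
have M20 : (m2 + m3) ^+ 2 != 0 by rewrite expf_neq0.
exists (scale3 c^-1 (V3 p1 q1 0)), (scale3 c^-1 (V3 p2 q2 0)), (scale3 c^-1 (V3 p3 q3 0)), c, 0.
split; [split|split; [split|split]].
- by rewrite /in_xy /= mulr0.
- by rewrite /in_xy /= mulr0.
- by rewrite /in_xy /= mulr0.
- rewrite /m_triangle /=; split; [|split]; last by rewrite !mulr0 !addr0.
    have -> : m1 * (c^-1 * p1) + m2 * (c^-1 * p2) + m3 * (c^-1 * p3) = c^-1 * (m1 * p1 + m2 * p2 + m3 * p3) by ring.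
    by rewrite cx mulr0.
  have -> : m1 * (c^-1 * q1) + m2 * (c^-1 * q2) + m3 * (c^-1 * q3) = c^-1 * (m1 * q1 + m2 * q2 + m3 * q3) by ring.
  by rewrite cy mulr0.
- rewrite /=.
  have -> : c^-1 * p1 * (c^-1 * q2) - c^-1 * q1 * (c^-1 * p2) = c^-1 ^+ 2 * (p1 * q2 - q1 * p2) by ring.
  by rewrite mulr_gt0 // exprn_gt0 // invr_gt0.
- have -> : m1 * dot (scale3 c^-1 (V3 p1 q1 0)) (scale3 c^-1 (V3 p1 q1 0)) = m1 * G * c^-1 ^+ 2 by rewrite /dot /= /G; ring.
  rewrite ci /I (_ : 1 - m1 = m2 + m3); last by lra.
  by field; rewrite G0 m10 M0.
- have -> : m2 * dot (scale3 c^-1 (V3 p2 q2 0)) (scale3 c^-1 (V3 p2 q2 0)) = m2 * (p2 ^+ 2 + q2 ^+ 2) * c^-1 ^+ 2 by rewrite /dot /=; ring.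
  have h : m2 * (p2 ^+ 2 + q2 ^+ 2) = (1 - m2) * (m1 * G) / (m2 + m3).
    by apply: (mulfI M20); rewrite e2; field.
  rewrite ci /I h.
  by field; rewrite G0 m10 M0.
- have -> : m3 * dot (scale3 c^-1 (V3 p3 q3 0)) (scale3 c^-1 (V3 p3 q3 0)) = m3 * (p3 ^+ 2 + q3 ^+ 2) * c^-1 ^+ 2 by rewrite /dot /=; ring.
  have h : m3 * (p3 ^+ 2 + q3 ^+ 2) = (1 - m3) * (m1 * G) / (m2 + m3).
    by apply: (mulfI M20); rewrite e3; field.
  rewrite ci /I h.
  by field; rewrite G0 m10 M0.
- exact: cp.
- by split; rewrite /rot_k /scale3 /= cos0 sin0 !mul1r !mul0r ?subr0 ?add0r !mulr0 !mulrA divff // !mul1r.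
Qed.

Lemma tail_lem {R : realType} (ux uy vx vy p1 q1 k2 psi1 psi2 : R) :
  ux * ux + uy * uy + 0 * 0 = 1 -> vx * vx + vy * vy + 0 * 0 = 1 ->
  ux * vx + uy * vy + 0 * 0 = 0 -> k2 != 0 ->
  tan psi1 = (p1 * uy - q1 * ux) / (p1 * ux + q1 * uy) ->
  cot psi2 = (p1 * vx + q1 * vy) / (p1 * vy - q1 * vx) ->
  cot psi2 = - tan psi1 /\
  tan psi1 = (k2 * p1 * uy - k2 * q1 * ux) / (k2 * p1 * ux + k2 * q1 * uy).
Proof.
move=> u11 u22 u12 k20 t1 t2.
set t := ux * vy - uy * vx.
have ev : vx = - t * uy.
  have h : vx * (ux * ux + uy * uy + 0 * 0) = ux * (ux * vx + uy * vy + 0 * 0) - uy * t by rewrite /t; ring.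
  by move: h; rewrite u11 u12; lra.
have ew : vy = t * ux.
  have h : vy * (ux * ux + uy * uy + 0 * 0) = uy * (ux * vx + uy * vy + 0 * 0) + ux * t by rewrite /t; ring.
  by move: h; rewrite u11 u12; lra.
have t0 : t != 0.
  apply/eqP => t0; move: u22; rewrite ev ew t0; lra.
split.
  rewrite t2 t1 ev ew.
  have -> : p1 * (- t * uy) + q1 * (t * ux) = t * (- (p1 * uy - q1 * ux)) by ring.
  have -> : p1 * (t * ux) - q1 * (- t * uy) = t * (p1 * ux + q1 * uy) by ring.
  by rewrite divKK // mulNr.
rewrite t1.
have -> : k2 * p1 * uy - k2 * q1 * ux = k2 * (p1 * uy - q1 * ux) by ring.
have -> : k2 * p1 * ux + k2 * q1 * uy = k2 * (p1 * ux + q1 * uy) by ring.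
by rewrite divKK.
Qed.
Theorem mainTheorem9 (R : realType) (m1 m2 m3 : R) (a1 a2 a3 : vec3 R)
    (u1 u2 : vec3 R) (lam1 lam2 psi1 psi2 phi theta : R) :
  0 < m1 -> 0 < m2 -> 0 < m3 -> m1 + m2 + m3 = 1 ->
  m_triangle m1 m2 m3 a1 a2 a3 -> in_xy a1 -> in_xy a2 -> in_xy a3 ->
  cross a1 a2 <> vzero R ->
  scale3 (norm3 (cross a1 a2))^-1 (cross a1 a2) = kvec R ->
  ~ is_north_pole_shape m1 m2 m3 a1 a2 a3 ->
  in_xy u1 -> in_xy u2 ->
  dot u1 u1 = 1 -> dot u2 u2 = 1 -> dot u1 u2 = 0 ->
  (forall w, inertia m1 m2 m3 a1 a2 a3 u1 w = lam1 * dot u1 w) ->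
  (forall w, inertia m1 m2 m3 a1 a2 a3 u2 w = lam2 * dot u2 w) ->
  (forall mu, is_eigenvalue (inertia m1 m2 m3 a1 a2 a3) mu -> lam1 <= mu) ->
  oriented_angle a1 u1 psi1 -> oriented_angle a1 u2 psi2 ->
  shape_coords m1 m2 m3 a1 a2 a3 phi theta ->
  tan (theta / 2) = - ((1 + sin phi) / cos phi) * tan psi1 /\
  - ((1 + sin phi) / cos phi) * tan psi1 = (1 + sin phi) / cos phi * cot psi2.
Proof.
case: a1 => p1 q1 z1; case: a2 => p2 q2 z2; case: a3 => p3 q3 z3.
case: u1 => ux uy uz; case: u2 => vx' vy' vz'.
move=> m1p m2p m3p msum [cx [cy cz]] h1 h2 h3 cr kv nnp hu1 hu2 u11 u22 u12 eig1 eig2 lmin or1 or2 [phir hX hY hZ].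
rewrite /in_xy /= in h1 h2 h3 hu1 hu2; subst.
rewrite /dot /= in u11 u22 u12.
rewrite /= in cx cy.
have Mp : 0 < m2 + m3 by lra.
have M0 : m2 + m3 != 0 by rewrite gt_eqF.
set k1 := Num.sqrt (m2 * m3 / (m2 + m3)).
set k2 := Num.sqrt (m1 / (m2 + m3)).
have k1p : 0 < k1 by rewrite sqrtr_gt0 divr_gt0 // mulr_gt0.
have k2p : 0 < k2 by rewrite sqrtr_gt0 divr_gt0.
have k1s : k1 ^+ 2 = m2 * m3 / (m2 + m3) by rewrite sqr_sqrtr // ltW // divr_gt0 // mulr_gt0.
have k2s : k2 ^+ 2 = m1 / (m2 + m3) by rewrite sqr_sqrtr // ltW // divr_gt0.
set x1 := k1 * (p3 - p2). set y1 := k1 * (q3 - q2).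
set x2 := k2 * p1. set y2 := k2 * q1.
pose mom := moment m1 m2 m3 (V3 p1 q1 0) (V3 p2 q2 0) (V3 p3 q3 0).
have eX : shapeX m1 m2 m3 (V3 p1 q1 0) (V3 p2 q2 0) (V3 p3 q3 0) = ((x2^+2+y2^+2) - (x1^+2+y1^+2)) / mom by [].
have eY : shapeY m1 m2 m3 (V3 p1 q1 0) (V3 p2 q2 0) (V3 p3 q3 0) = 2 * (x1 * x2 + y1 * y2) / mom by [].
have eZ : shapeZ m1 m2 m3 (V3 p1 q1 0) (V3 p2 q2 0) (V3 p3 q3 0) = 2 * (x1 * y2 - y1 * x2) / mom by [].
rewrite {}eX in hX; rewrite {}eY in hY; rewrite {}eZ in hZ.
have Sxx : m1 * p1 * p1 + m2 * p2 * p2 + m3 * p3 * p3 = x1 ^+ 2 + x2 ^+ 2.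
  by rewrite (com_bil msum M0 cx cx) /x1 /x2 !exprMn k1s k2s; ring.
have Syy : m1 * q1 * q1 + m2 * q2 * q2 + m3 * q3 * q3 = y1 ^+ 2 + y2 ^+ 2.
  by rewrite (com_bil msum M0 cy cy) /y1 /y2 !exprMn k1s k2s; ring.
have Sxy : m1 * p1 * q1 + m2 * p2 * q2 + m3 * p3 * q3 = x1 * y1 + x2 * y2.
  rewrite (com_bil msum M0 cx cy) /x1 /x2 /y1 /y2.
  rewrite -k1s -k2s; ring.
set I := x1 ^+ 2 + y1 ^+ 2 + x2 ^+ 2 + y2 ^+ 2.
have momE : mom = I.
  rewrite /mom /moment /dot /= /I; move: Sxx Syy; rewrite /x1 /x2 /y1 /y2 => Sxx Syy.
  have -> : m1 * (p1 * p1 + q1 * q1 + 0 * 0) + m2 * (p2 * p2 + q2 * q2 + 0 * 0) +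
    m3 * (p3 * p3 + q3 * q3 + 0 * 0) = (m1 * p1 * p1 + m2 * p2 * p2 + m3 * p3 * p3) + (m1 * q1 * q1 + m2 * q2 * q2 + m3 * q3 * q3) by ring.
  rewrite Sxx Syy; ring.
rewrite momE in hX hY hZ.
have Bf : forall ax ay w, inertia m1 m2 m3 (V3 p1 q1 0) (V3 p2 q2 0) (V3 p3 q3 0) (V3 ax ay 0) w
   = vx w * (ax * (y1 ^+ 2 + y2 ^+ 2) - ay * (x1 * y1 + x2 * y2)) + vy w * (ay * (x1 ^+ 2 + x2 ^+ 2) - ax * (x1 * y1 + x2 * y2)).
  move=> ax ay [wx wy wz]; rewrite -Sxx -Syy -Sxy /inertia /dot /cross /=; ring.
have Cp : 0 < p1 * q2 - q1 * p2.
  have := congr1 (fun v => vz v) kv; rewrite /= .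
  set n := norm3 _ => hn.
  have n0 : 0 <= n^-1 by rewrite invr_ge0 sqrtr_ge0.
  rewrite lt_neqAle; apply/andP; split.
    by apply/eqP => h; move: hn; rewrite -h mulr0 => /eqP; rewrite eq_sym oner_eq0.
  rewrite leNgt; apply/negP => h.
  have : n^-1 * (p1 * q2 - q1 * p2) <= 0 by rewrite mulr_ge0_le0 // ltW.
  by rewrite hn ler10.
have eC : (m2 + m3) * (p1 * q2 - q1 * p2) = m3 * ((p3 - p2) * q1 - (q3 - q2) * p1).
  apply/eqP; rewrite -subr_eq0; apply/eqP.
  have -> : (m2 + m3) * (p1 * q2 - q1 * p2) - m3 * ((p3 - p2) * q1 - (q3 - q2) * p1) =
    p1 * (m1 * q1 + m2 * q2 + m3 * q3) - q1 * (m1 * p1 + m2 * p2 + m3 * p3) by ring.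
  by rewrite cx cy !mulr0 subrr.
set Q := x1 * y2 - y1 * x2.
have QE : Q = k1 * k2 * ((p3 - p2) * q1 - (q3 - q2) * p1) by rewrite /Q /x1 /x2 /y1 /y2; ring.
have Qp : 0 < Q.
  rewrite QE mulr_gt0 ?mulr_gt0 //.
  by rewrite -(pmulr_rgt0 _ m3p) -eC mulr_gt0.
have IQ : I - 2 * Q = (x1 - y2) ^+ 2 + (y1 + x2) ^+ 2 by rewrite /I /Q; ring.
have Ip : 0 < I.
  have : 0 <= I - 2 * Q by rewrite IQ addr_ge0 ?sqr_ge0.
  lra.
have I0 : I != 0 by rewrite gt_eqF.
set T := I * sin phi.
have T_ge0 : 0 <= T by apply: mulr_ge0; [exact: ltW | exact: sin_ge0_pi].
have cosE : cos phi = 2 * Q / I by rewrite -hZ.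
have TQ : T ^+ 2 = I ^+ 2 - 4 * Q ^+ 2.
  by rewrite /T exprMn sin2cos2 cosE; field.
have Gp : 0 < p1 ^+ 2 + q1 ^+ 2.
  rewrite lt_neqAle addr_ge0 ?sqr_ge0 // andbT eq_sym; apply/negP.
  rewrite paddr_eq0 ?sqr_ge0 // !sqrf_eq0 => /andP[/eqP h /eqP h'].
  by move: Cp; rewrite h h' !mul0r subrr ltxx.
have Tp : 0 < T.
  rewrite lt_neqAle T_ge0 andbT; apply/negP => /eqP T0; apply: nnp.
  have IQ2 : I = 2 * Q.
    have : (I - 2 * Q) * (I + 2 * Q) = 0 by move: TQ; rewrite -T0 expr0n /=; lra.
    by move/eqP; rewrite mulf_eq0 => /orP[/eqP|/eqP]; lra.
  have sq : (x1 - y2) ^+ 2 + (y1 + x2) ^+ 2 = 0 by rewrite -IQ IQ2 subrr.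
  move: sq; move/eqP; rewrite paddr_eq0 ?sqr_ge0 // !sqrf_eq0 => /andP[/eqP h1 /eqP h2].
  apply: (np_case _ _ _ _ _ _ _ _ _ k1 k2 m1p m2p m3p msum cx cy Cp k1p k1s k2s).
    by apply/eqP; rewrite -subr_eq0; apply/eqP; exact: h1.
  by apply/eqP; rewrite -subr_eq0 opprK; apply/eqP; exact: h2.
set A := x1 ^+ 2 - y1 ^+ 2 + x2 ^+ 2 - y2 ^+ 2.
set Bw := 2 * (x1 * y1 + x2 * y2).
have TA : T ^+ 2 = A ^+ 2 + Bw ^+ 2.
  by rewrite TQ /I /Q /A /Bw TA_id.
have u1' : ux ^+ 2 + uy ^+ 2 = 1 by rewrite -u11; lra.
have e1 : ux * ((I - A) / 2) - uy * (Bw / 2) = lam1 * ux.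
  by have := eig1 (V3 1 0 0); rewrite Bf /dot /= /I /A /Bw; lra.
have e2 : uy * ((I + A) / 2) - ux * (Bw / 2) = lam1 * uy.
  by have := eig1 (V3 0 1 0); rewrite Bf /dot /= /I /A /Bw; lra.
have lle : lam1 <= (I - T) / 2.
  apply: lmin.
  have [A0|A0] := leP 0 A.
    exists (V3 (T + A) Bw 0); split.
      by move=> /(congr1 (fun v => vx v)) /= h; lra.
    move=> w; rewrite Bf /dot /=.
    have h1 : (T + A) * (y1 ^+ 2 + y2 ^+ 2) - Bw * (x1 * y1 + x2 * y2) = (I - T) / 2 * (T + A).
      by move: TA; rewrite /I /A /Bw; lra.
    have h2 : Bw * (x1 ^+ 2 + x2 ^+ 2) - (T + A) * (x1 * y1 + x2 * y2) = (I - T) / 2 * Bw.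
      by rewrite /I /A /Bw; lra.
    by rewrite h1 h2; lra.
  exists (V3 Bw (T - A) 0); split.
    by move=> /(congr1 (fun v => vy v)) /= h; lra.
  move=> w; rewrite Bf /dot /=.
  have h1 : Bw * (y1 ^+ 2 + y2 ^+ 2) - (T - A) * (x1 * y1 + x2 * y2) = (I - T) / 2 * Bw.
    by rewrite /I /A /Bw; lra.
  have h2 : (T - A) * (x1 ^+ 2 + x2 ^+ 2) - Bw * (x1 * y1 + x2 * y2) = (I - T) / 2 * (T - A).
    by move: TA; rewrite /I /A /Bw; lra.
  by rewrite h1 h2; lra.
have [eA eB] := eig_alg e1 e2 u1' TA Tp lle.
set na := norm3 (V3 p1 q1 0).
have nap : 0 < na by rewrite /na /norm3 /dot /= sqrtr_gt0; move: Gp; rewrite !expr2; lra.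
have o1x : na * ux = cos psi1 * p1 - sin psi1 * q1.
  by have := congr1 (fun v => vx v) or1; rewrite /= /norm3 /dot /= u11 sqrtr1 mul1r.
have o1y : na * uy = sin psi1 * p1 + cos psi1 * q1.
  by have := congr1 (fun v => vy v) or1; rewrite /= /norm3 /dot /= u11 sqrtr1 mul1r.
have o2x : na * vx' = cos psi2 * p1 - sin psi2 * q1.
  by have := congr1 (fun v => vx v) or2; rewrite /= /norm3 /dot /= u22 sqrtr1 mul1r.
have o2y : na * vy' = sin psi2 * p1 + cos psi2 * q1.
  by have := congr1 (fun v => vy v) or2; rewrite /= /norm3 /dot /= u22 sqrtr1 mul1r.
have [t1 _] := angle_tan _ _ _ _ _ _ nap Gp o1x o1y.
have [_ t2] := angle_tan _ _ _ _ _ _ nap Gp o2x o2y.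
have k20 : k2 != 0 by rewrite gt_eqF.
have [cotE t1'] := tail_lem _ _ _ _ _ _ _ _ _ u11 u22 u12 k20 t1 t2.
have T0 : T != 0 by rewrite gt_eqF.
have sinE : sin phi = T / I by rewrite /T [I * _]mulrC mulfK.
have hsT : T * sin theta = 2 * (x1 * x2 + y1 * y2).
  by rewrite /T -mulrA -hY mulrC divfK.
have hcT : T * cos theta = (x2 ^+ 2 + y2 ^+ 2) - (x1 ^+ 2 + y1 ^+ 2).
  by rewrite /T -mulrA -hX mulrC divfK.
split; last by rewrite cotE mulrN mulNr.
rewrite tan_half -(divKK T (sin theta) (1 + cos theta) T0) mulrDr mulr1 hsT hcT addrA.
rewrite (core x1 y1 x2 y2 ux uy T Qp Tp Ip TQ u1' eA eB).
rewrite sinE cosE t1'; reflexivity.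
Qed.
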